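(* Let $\Sigma$ be a functor with a free monad $(\Sigma^*,\eta,\mu)$ such that $\Sigma^*X$ is countable whenever $X$ is countable. Let $(B,\sqsubseteq)$ be an ordered functor with a cofree comonad, such that $B$ preserves weak pullbacks and the restriction of $(B,\sqsubseteq)$ to countable sets is $\mathsf{DCPO}_\bot$-ordered. Let $\rho\colon\Sigma B^\infty\Rightarrow B\Sigma^*$ be a monotone biGSOS specification. Then for every coalgebra $c\colon X\to BX$ with $X$ countable the least fixed point $c^\sharp$ of $\varphi_c$ exists, and setting $\overline{\Sigma^*}_c(X,c)=(\Sigma^*X,c^\sharp)$, $\overline{\Sigma^*}_c(h)=\Sigma^*h$, together with the components of $\eta$ and $\mu$ at countable sets, defines a monad on $\mathsf{Coalg}_c(B)$ that lifts the restriction $(\Sigma^*_c,\eta^c,\mu^c)$ of $(\Sigma^*,\eta,\mu)$ to $\mathsf{cSet}$.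
   Context: $\mathsf{cSet}$ is the full subcategory of $\mathsf{Set}$ on countable sets; $\mathsf{Coalg}_c(B)$ is the full subcategory of $B$-coalgebras with countable carrier (morphisms: $h$ with $Bh\circ c=d\circ h$), with forgetful functor $U\colon\mathsf{Coalg}_c(B)\to\mathsf{cSet}$. A monad $(\overline T,\overline\eta,\overline\mu)$ on $\mathsf{Coalg}_c(B)$ lifts a monad $(T,\eta,\mu)$ on $\mathsf{cSet}$ if $U\overline T=TU$, $U\overline\eta=\eta U$, $U\overline\mu=\mu U$. An ordered functor $(B,\sqsubseteq)$ is a functor $B\colon\mathsf{Set}\to\mathsf{Set}$ with a preorder $\sqsubseteq_{BX}$ on each $BX$ such that each $Bf$ is monotone. Its restriction to countable sets is $\mathsf{DCPO}_\bot$-ordered if for every countable $X$, $\sqsubseteq_{BX}$ is a partial order making $BX$ a pointed DCPO, and for every function $f$ between countable sets, $Bf$ preserves suprema of all directed subsets including the empty one. Relation lifting: for $R\subseteq X\times Y$ with projections $\pi_1,\pi_2$ and any functor $F$, $\mathsf{Rel}(F)(R)=\{(b,c)\in FX\times FY\mid\exists d\in FR.\ F\pi_1(d)=b,\ F\pi_2(d)=c\}$; $\mathsf{Rel}_{\sqsubseteq}(B)(R)=\{(b,c)\mid\exists b',c'.\ b\sqsubseteq b',\ (b',c')\in\mathsf{Rel}(B)(R),\ c'\sqsubseteq c\}$. For coalgebras $f\colon X\to BX$, $g\colon Y\to BY$, $R\subseteq X\times Y$ is a simulation if $(f(x),g(y))\in\mathsf{Rel}_{\sqsubseteq}(B)(R)$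 for all $(x,y)\in R$; similarity is the greatest simulation. Cofree comonad: for each set $X$, $\theta_X\colon B^\infty X\to BB^\infty X$, $\epsilon_X\colon B^\infty X\to X$ with $\langle\theta_X,\epsilon_X\rangle$ a final $B(-)\times X$-coalgebra; $f^\infty\colon X\to B^\infty X$ is the unique coalgebra morphism from $\langle f,\mathrm{id}_X\rangle$ to it. The functor $B(-)\times X$ is ordered by $(b,x)\,\widetilde\sqsubseteq\,(c,y)$ iff $b\sqsubseteq c$ and $x=y$; $\lesssim_{B^\infty X}$ is the similarity of $\langle\theta_X,\epsilon_X\rangle$ with itself w.r.t. this order. Free monad: for each set $X$, $\iota_X\colon\Sigma\Sigma^*X\to\Sigma^*X$, $\eta_X\colon X\to\Sigma^*X$ with $[\iota_X,\eta_X]$ an initial algebra for $\Sigma(-)+X$; $\mu_X$ is the unique map with $\mu_X\circ\eta_{\Sigma^*X}=\mathrm{id}$ and $\mu_X\circ\iota_{\Sigma^*X}=\iota_X\circ\Sigma\mu_X$. A biGSOS specification is a natural transformation $\rho\colon\Sigma B^\infty\Rightarrow B\Sigma^*$; it is monotone if for every set $X$ and all $u,v\in\Sigma B^\infty X$ with $(u,v)\in\mathsf{Rel}(\Sigma)(\lesssim_{B^\infty X})$, $\rho_X(u)\sqsubseteq_{B\Sigma^*X}\rho_X(v)$. For $c\colon X\to BX$, $\varphi_c(f)=[\,B\mu_X\circ\rho_{\Sigma^*X}\circ\Sigma f^\infty,\ B\eta_X\circ c\,]\circ[\iota_X,\eta_X]^{-1}$ for $f\colon\Sigma^*X\to B\Sigma^*X$,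 ordered pointwise. *)

(* Defs.v *)
Record Functor := {
  fobj :> Type -> Type;
  fmap : forall A C : Type, (A -> C) -> fobj A -> fobj C;
  fmap_id : forall A (x : fobj A), fmap A A (fun a => a) x = x;
  fmap_comp : forall A C D (f : A -> C) (g : C -> D) (x : fobj A),
      fmap A D (fun a => g (f a)) x = fmap C D g (fmap A C f x)
}.
Arguments fmap _ {A C} _ _.

Definition countable (X : Type) : Prop :=
  exists f : X -> nat, forall x y, f x = f y -> x = y.

Definition relT {X Y : Type} (R : X -> Y -> Prop) : Type :=
  { p : X * Y | R (fst p) (snd p) }.

Definition RelG (F : Type -> Type) (fm : forall A C : Type, (A -> C) -> F A -> F C)
  {X Y : Type} (R : X -> Y -> Prop) (b : F X) (c : F Y) : Prop :=
  exists d : F (relT R),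
    fm (relT R) X (fun p => fst (proj1_sig p)) d = b /\
    fm (relT R) Y (fun p => snd (proj1_sig p)) d = c.

Definition Rel (F : Functor) {X Y : Type} (R : X -> Y -> Prop) (b : F X) (c : F Y) : Prop :=
  RelG F (@fmap F) R b c.

Definition RelLe (F : Type -> Type) (fm : forall A C : Type, (A -> C) -> F A -> F C)
  (le : forall A : Type, F A -> F A -> Prop)
  {X Y : Type} (R : X -> Y -> Prop) (b : F X) (c : F Y) : Prop :=
  exists (b' : F X) (c' : F Y), le X b b' /\ RelG F fm R b' c' /\ le Y c' c.

Definition simulation (F : Type -> Type) (fm : forall A C : Type, (A -> C) -> F A -> F C)
  (le : forall A : Type, F A -> F A -> Prop)
  {X Y : Type} (f : X -> F X) (g : Y -> F Y) (R : X -> Y -> Prop) : Prop :=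
  forall x y, R x y -> RelLe F fm le R (f x) (g y).

Definition similarity (F : Type -> Type) (fm : forall A C : Type, (A -> C) -> F A -> F C)
  (le : forall A : Type, F A -> F A -> Prop)
  {X Y : Type} (f : X -> F X) (g : Y -> F Y) (x : X) (y : Y) : Prop :=
  exists R : X -> Y -> Prop, simulation F fm le f g R /\ R x y.

Record OrderedFunctor := {
  ofun :> Functor;
  ole : forall X : Type, ofun X -> ofun X -> Prop;
  ole_refl : forall X (b : ofun X), ole X b b;
  ole_trans : forall X (a b c : ofun X), ole X a b -> ole X b c -> ole X a c;
  fmap_mono : forall X Y (f : X -> Y) (b c : ofun X),
      ole X b c -> ole Y (fmap ofun f b) (fmap ofun f c)
}.
Arguments ole _ {X} _ _.

Definition directed {T : Type} (le : T -> T -> Prop) (D : T -> Prop) : Prop :=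
  (exists x, D x) /\
  (forall x y, D x -> D y -> exists z, D z /\ le x z /\ le y z).

Definition is_sup {T : Type} (le : T -> T -> Prop) (D : T -> Prop) (s : T) : Prop :=
  (forall x, D x -> le x s) /\ (forall u, (forall x, D x -> le x u) -> le s u).

Definition is_bot {T : Type} (le : T -> T -> Prop) (b : T) : Prop :=
  forall x, le b x.

Definition DCPObot_on_countable (B : OrderedFunctor) : Prop :=
  (forall X : Type, countable X ->
     (forall b c : B X, ole B b c -> ole B c b -> b = c) /\
     (exists bot : B X, is_bot (ole B) bot) /\
     (forall D : B X -> Prop, directed (ole B) D -> exists s, is_sup (ole B) D s)) /\
  (forall (X Y : Type) (f : X -> Y), countable X -> countable Y ->
     (forall (D : B X -> Prop) (s : B X), directed (ole B) D -> is_sup (ole B) D s ->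
        is_sup (ole B) (fun y => exists x, D x /\ y = fmap B f x) (fmap B f s)) /\
     (* preservation of the supremum of the empty set, i.e. of the bottom *)
     (forall s : B X, is_sup (ole B) (fun _ => False) s ->
        is_sup (ole B) (fun _ => False) (fmap B f s))).

Definition weak_pullback {P X Y Z : Type} (p1 : P -> X) (p2 : P -> Y)
  (f : X -> Z) (g : Y -> Z) : Prop :=
  (forall p, f (p1 p) = g (p2 p)) /\
  (forall (Q : Type) (q1 : Q -> X) (q2 : Q -> Y),
     (forall q, f (q1 q) = g (q2 q)) ->
     exists h : Q -> P, (forall q, p1 (h q) = q1 q) /\ (forall q, p2 (h q) = q2 q)).

Definition preserves_weak_pullbacks (F : Functor) : Prop :=
  forall (P X Y Z : Type) (p1 : P -> X) (p2 : P -> Y) (f : X -> Z) (g : Y -> Z),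
    weak_pullback p1 p2 f g ->
    weak_pullback (fmap F p1) (fmap F p2) (fmap F f) (fmap F g).

(** * Free monad: [iota_X, eta_X] is an initial Σ(-)+X algebra
    (with a chosen unique mediating map [fm_fold]). *)
Record FreeMonad (S : Functor) := {
  fm_obj :> Type -> Type;
  fm_iota : forall X : Type, S (fm_obj X) -> fm_obj X;
  fm_eta : forall X : Type, X -> fm_obj X;
  fm_fold : forall X A : Type, (S A -> A) -> (X -> A) -> fm_obj X -> A;
  fm_fold_iota : forall X A (alg : S A -> A) (f : X -> A) (s : S (fm_obj X)),
      fm_fold X A alg f (fm_iota X s) = alg (fmap S (fm_fold X A alg f) s);
  fm_fold_eta : forall X A (alg : S A -> A) (f : X -> A) (x : X),
      fm_fold X A alg f (fm_eta X x) = f x;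
  fm_fold_unique : forall X A (alg : S A -> A) (f : X -> A) (h : fm_obj X -> A),
      (forall s, h (fm_iota X s) = alg (fmap S h s)) ->
      (forall x, h (fm_eta X x) = f x) ->
      forall t, h t = fm_fold X A alg f t
}.
Arguments fm_iota {S} _ {X} _.
Arguments fm_eta {S} _ {X} _.
Arguments fm_fold {S} _ {X A} _ _ _.

Definition Tmap {S : Functor} (T : FreeMonad S) {X Y : Type} (h : X -> Y) : T X -> T Y :=
  fm_fold T (fm_iota T) (fun x => fm_eta T (h x)).

Definition Tmu {S : Functor} (T : FreeMonad S) (X : Type) : T (T X) -> T X :=
  fm_fold T (fm_iota T) (fun t => t).

(* [iota_X, eta_X]^{-1} : Σ*X -> ΣΣ*X + X (Lambek) *)
Definition Tunfold1 {S : Functor} (T : FreeMonad S) (X : Type) : T X -> S (T X) + X :=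
  fm_fold T
    (fun s => inl (fmap S (fun e : S (T X) + X =>
                              match e with inl s' => fm_iota T s' | inr x => fm_eta T x end) s))
    (fun x => inr x).

(** * Cofree comonad: <theta_X, eps_X> is a final B(-)×X coalgebra
    (with a chosen unique mediating map [cf_unfold]). *)
Record CofreeComonad (B : Functor) := {
  cf_obj :> Type -> Type;
  cf_theta : forall X : Type, cf_obj X -> B (cf_obj X);
  cf_eps : forall X : Type, cf_obj X -> X;
  cf_unfold : forall X A : Type, (A -> B A * X) -> A -> cf_obj X;
  cf_unfold_theta : forall X A (g : A -> B A * X) (a : A),
      cf_theta X (cf_unfold X A g a) = fmap B (cf_unfold X A g) (fst (g a));
  cf_unfold_eps : forall X A (g : A -> B A * X) (a : A),
      cf_eps X (cf_unfold X A g a) = snd (g a);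
  cf_unfold_unique : forall X A (g : A -> B A * X) (h : A -> cf_obj X),
      (forall a, cf_theta X (h a) = fmap B h (fst (g a))) ->
      (forall a, cf_eps X (h a) = snd (g a)) ->
      forall a, h a = cf_unfold X A g a
}.
Arguments cf_theta {B} _ {X} _.
Arguments cf_eps {B} _ {X} _.
Arguments cf_unfold {B} _ {X A} _ _.

Definition Cmap {B : Functor} (C : CofreeComonad B) {X Y : Type} (h : X -> Y) : C X -> C Y :=
  cf_unfold C (fun t => (cf_theta C t, h (cf_eps C t))).

Definition Cinf {B : Functor} (C : CofreeComonad B) {X : Type} (f : X -> B X) : X -> C X :=
  cf_unfold C (fun x => (f x, x)).

Definition prodmap (B : Functor) (X : Type) (A A' : Type) (g : A -> A') (p : B A * X) : B A' * X :=
  (fmap B g (fst p), snd p).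

Definition prodle (B : OrderedFunctor) (X : Type) (A : Type) (p q : B A * X) : Prop :=
  ole B (fst p) (fst q) /\ snd p = snd q.

Definition Csim {B : OrderedFunctor} (C : CofreeComonad B) (X : Type) : C X -> C X -> Prop :=
  similarity (fun A => B A * X)%type (prodmap B X) (prodle B X)
    (fun t : C X => (cf_theta C t, cf_eps C t))
    (fun t : C X => (cf_theta C t, cf_eps C t)).

Definition biGSOS_natural (S : Functor) (T : FreeMonad S) (B : Functor) (C : CofreeComonad B)
  (rho : forall X : Type, S (C X) -> B (T X)) : Prop :=
  forall (X Y : Type) (h : X -> Y) (u : S (C X)),
    rho Y (fmap S (Cmap C h) u) = fmap B (Tmap T h) (rho X u).

Definition biGSOS_monotone (S : Functor) (T : FreeMonad S) (B : OrderedFunctor)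
  (C : CofreeComonad B) (rho : forall X : Type, S (C X) -> B (T X)) : Prop :=
  forall (X : Type) (u v : S (C X)),
    Rel S (Csim C X) u v -> ole B (rho X u) (rho X v).

Definition phi (S : Functor) (T : FreeMonad S) (B : Functor) (C : CofreeComonad B)
  (rho : forall X : Type, S (C X) -> B (T X)) {X : Type} (c : X -> B X)
  (f : T X -> B (T X)) : T X -> B (T X) :=
  fun t => match Tunfold1 T X t with
           | inl s => fmap B (Tmu T X) (rho (T X) (fmap S (Cinf C f) s))
           | inr x => fmap B (fm_eta T) (c x)
           end.

Definition is_lfp (S : Functor) (T : FreeMonad S) (B : OrderedFunctor) (C : CofreeComonad B)
  (rho : forall X : Type, S (C X) -> B (T X)) {X : Type} (c : X -> B X)
  (s : T X -> B (T X)) : Prop :=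
  (forall t, phi S T B C rho c s t = s t) /\
  (forall g : T X -> B (T X), (forall t, phi S T B C rho c g t = g t) ->
     forall t, ole B (s t) (g t)).

Definition coalg_hom (B : Functor) {X Y : Type} (c : X -> B X) (d : Y -> B Y) (h : X -> Y) : Prop :=
  forall x, fmap B h (c x) = d (h x).

(* Main.v *)
Require Import Defs.
From Stdlib Require Import ClassicalEpsilon FunctionalExtensionality.

Lemma pataraia (P : Type) (le : P -> P -> Prop)
  (le_refl : forall x, le x x) (le_trans : forall x y z, le x y -> le y z -> le x z)
  (bot : P) (bot_le : forall x, le bot x)
  (sup : (P -> Prop) -> P) (sup_spec : forall D, directed le D -> is_sup le D (sup D))
  (f : P -> P) (fmono : forall x y, le x y -> le (f x) (f y))
  (Q : P -> Prop) (Qbot : Q bot) (Qf : forall x, Q x -> Q (f x))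
  (Qsup : forall D, directed le D -> (forall x, D x -> Q x) -> Q (sup D)) :
  exists m, le (f m) m /\ le m (f m) /\ Q m /\ (forall g, le (f g) g -> le m g).
Proof.
  pose (P' := fun x => le x (f x) /\ (forall g, le (f g) g -> le x g) /\ Q x).
  pose (I := fun h : P -> P => (forall x, P' x -> P' (h x)) /\
       (forall x y, P' x -> P' y -> le x y -> le (h x) (h y)) /\
       (forall x, P' x -> le x (h x))).
  pose (Dx := fun x y => exists h, I h /\ y = h x).
  pose (t := fun x => sup (Dx x)).
  assert (Iid : I (fun x => x)).
  { split; [|split]; auto. }
  assert (Dir : forall x, P' x -> directed le (Dx x)).
  { intros x Hx. split.
    - exists x. exists (fun x => x). auto.
    - intros y1 y2 [h1 [Ih1 E1]] [h2 [Ih2 E2]]. subst y1 y2.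
      exists (h1 (h2 x)).
      destruct Ih1 as [A1 [B1 C1]]; destruct Ih2 as [A2 [B2 C2]].
      split; [|split].
      + exists (fun x => h1 (h2 x)); split; auto. split; [|split].
        * auto.
        * intros a b Ha Hb Hab. apply B1; auto.
        * intros a Ha. eapply le_trans. apply C2; auto. apply C1; auto.
      + apply B1; auto.
      + apply C1; auto. }
  assert (Psup : forall D, directed le D -> (forall x, D x -> P' x) -> P' (sup D)).
  { intros D HD HP. destruct (sup_spec D HD) as [Hub Hl]. split; [|split].
    - apply Hl. intros d Hd. eapply le_trans. apply (proj1 (HP d Hd)). apply fmono. auto.
    - intros g Hg. apply Hl. intros d Hd. apply (proj1 (proj2 (HP d Hd))). auto.
    - apply Qsup; auto. intros x Hx; apply (proj2 (proj2 (HP x Hx))). }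
  assert (Pt : forall x, P' x -> P' (t x)).
  { intros x Hx. apply Psup. auto. intros y [h [Ih E]]. subst y. apply (proj1 Ih). auto. }
  assert (It : I t).
  { split; [|split].
    - auto.
    - intros x y Hx Hy Hxy. destruct (sup_spec _ (Dir y Hy)) as [Huy _].
      destruct (sup_spec _ (Dir x Hx)) as [_ Hlx].
      apply Hlx. intros z [h [Ih E]]. subst z. apply le_trans with (h y). apply (proj1 (proj2 Ih)); auto.
      apply Huy. exists h; auto.
    - intros x Hx. destruct (sup_spec _ (Dir x Hx)) as [Hu _]. apply Hu. exists (fun x => x). auto. }
  assert (Pf : forall x, P' x -> P' (f x)).
  { intros x [H1 [H2 H3]]. split; [|split].
    - apply fmono; auto.
    - intros g Hg. eapply le_trans. apply fmono. apply H2. exact Hg. exact Hg.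
    - auto. }
  assert (Ift : I (fun x => f (t x))).
  { destruct It as [A [B C]]. split; [|split].
    - auto.
    - intros x y Hx Hy Hxy. apply fmono. auto.
    - intros x Hx. eapply le_trans. apply C; auto. apply (proj1 (Pt x Hx)). }
  assert (Pbot : P' bot). { split; [apply bot_le | split; [intros; apply bot_le | exact Qbot]]. }
  exists (t bot). destruct (Pt bot Pbot) as [H1 [H2 H3]].
  split; [|split; [|split]]; auto.
  destruct (sup_spec _ (Dir bot Pbot)) as [Hu _]. apply Hu. exists (fun x => f (t x)). auto.
Qed.

Lemma fold_eq (S : Functor) (T : FreeMonad S) X A (alg : S A -> A) (f : X -> A) (h1 h2 : T X -> A) :
  (forall s, h1 (fm_iota T s) = alg (fmap S h1 s)) -> (forall x, h1 (fm_eta T x) = f x) ->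
  (forall s, h2 (fm_iota T s) = alg (fmap S h2 s)) -> (forall x, h2 (fm_eta T x) = f x) ->
  forall t, h1 t = h2 t.
Proof.
  intros Ha Hb Hc Hd t.
  rewrite (fm_fold_unique S T X A alg f h1 Ha Hb t), (fm_fold_unique S T X A alg f h2 Hc Hd t).
  reflexivity.
Qed.

Lemma Tmap_eta S (T : FreeMonad S) X Y (h : X -> Y) x : Tmap T h (fm_eta T x) = fm_eta T (h x).
Proof. unfold Tmap. rewrite fm_fold_eta. reflexivity. Qed.
Lemma Tmap_iota S (T : FreeMonad S) X Y (h : X -> Y) s :
  Tmap T h (fm_iota T s) = fm_iota T (fmap S (Tmap T h) s).
Proof. unfold Tmap. rewrite fm_fold_iota. reflexivity. Qed.
Lemma Tmu_eta S (T : FreeMonad S) X (t : T X) : Tmu T X (fm_eta T t) = t.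
Proof. unfold Tmu. rewrite fm_fold_eta. reflexivity. Qed.
Lemma Tmu_iota S (T : FreeMonad S) X s :
  Tmu T X (fm_iota T s) = fm_iota T (fmap S (Tmu T X) s).
Proof. unfold Tmu. rewrite fm_fold_iota. reflexivity. Qed.

Lemma Tmap_id S (T : FreeMonad S) X (t : T X) : Tmap T (fun x : X => x) t = t.
Proof.
  apply (fold_eq S T X (T X) (fm_iota T) (fm_eta T) (Tmap T (fun x => x)) (fun t => t)).
  - intros; apply Tmap_iota.
  - intros; apply Tmap_eta.
  - intros; rewrite fmap_id; reflexivity.
  - reflexivity.
Qed.

Lemma Tmap_comp S (T : FreeMonad S) X Y Z (h : X -> Y) (g : Y -> Z) (t : T X) :
  Tmap T (fun x => g (h x)) t = Tmap T g (Tmap T h t).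
Proof.
  apply (fold_eq S T X (T Z) (fm_iota T) (fun x => fm_eta T (g (h x)))
           (Tmap T (fun x => g (h x))) (fun t => Tmap T g (Tmap T h t))).
  - intros; apply Tmap_iota.
  - intros; apply Tmap_eta.
  - intros; rewrite Tmap_iota, Tmap_iota, <- fmap_comp; reflexivity.
  - intros; rewrite !Tmap_eta; reflexivity.
Qed.

Lemma Tmu_nat S (T : FreeMonad S) X Y (h : X -> Y) (t : T (T X)) :
  Tmap T h (Tmu T X t) = Tmu T Y (Tmap T (Tmap T h) t).
Proof.
  apply (fold_eq S T (T X) (T Y) (fm_iota T) (Tmap T h)
           (fun t => Tmap T h (Tmu T X t)) (fun t => Tmu T Y (Tmap T (Tmap T h) t))).
  - intros; rewrite Tmu_iota, Tmap_iota, <- fmap_comp; reflexivity.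
  - intros; rewrite Tmu_eta; reflexivity.
  - intros; rewrite Tmap_iota, Tmu_iota, <- fmap_comp; reflexivity.
  - intros; rewrite Tmap_eta, Tmu_eta; reflexivity.
Qed.

Lemma Tmu_assoc S (T : FreeMonad S) X (t : T (T (T X))) :
  Tmu T X (Tmu T (T X) t) = Tmu T X (Tmap T (Tmu T X) t).
Proof.
  apply (fold_eq S T (T (T X)) (T X) (fm_iota T) (Tmu T X)
           (fun t => Tmu T X (Tmu T (T X) t)) (fun t => Tmu T X (Tmap T (Tmu T X) t))).
  - intros; rewrite Tmu_iota, Tmu_iota, <- fmap_comp; reflexivity.
  - intros; rewrite Tmu_eta; reflexivity.
  - intros; rewrite Tmap_iota, Tmu_iota, <- fmap_comp; reflexivity.
  - intros; rewrite Tmap_eta, Tmu_eta; reflexivity.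
Qed.

Lemma Tmu_Tmap_eta S (T : FreeMonad S) X (t : T X) : Tmu T X (Tmap T (fm_eta T) t) = t.
Proof.
  apply (fold_eq S T X (T X) (fm_iota T) (fm_eta T)
           (fun t => Tmu T X (Tmap T (fm_eta T) t)) (fun t => t)).
  - intros; rewrite Tmap_iota, Tmu_iota, <- fmap_comp; reflexivity.
  - intros; rewrite Tmap_eta, Tmu_eta; reflexivity.
  - intros; rewrite fmap_id; reflexivity.
  - reflexivity.
Qed.

Definition Tcase S (T : FreeMonad S) X (e : S (T X) + X) : T X :=
  match e with inl s' => fm_iota T s' | inr x => fm_eta T x end.

Lemma Tcase_unfold S (T : FreeMonad S) X (t : T X) : Tcase S T X (Tunfold1 T X t) = t.
Proof.
  apply (fold_eq S T X (T X) (fm_iota T) (fm_eta T)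
           (fun t => Tcase S T X (Tunfold1 T X t)) (fun t => t)).
  - intros s. unfold Tunfold1 at 1. rewrite fm_fold_iota. simpl.
    rewrite <- fmap_comp. reflexivity.
  - intros x. unfold Tunfold1. rewrite fm_fold_eta. reflexivity.
  - intros; rewrite fmap_id; reflexivity.
  - reflexivity.
Qed.

Lemma Tunfold1_iota S (T : FreeMonad S) X s : Tunfold1 T X (fm_iota T s) = inl s.
Proof.
  unfold Tunfold1 at 1. rewrite fm_fold_iota. f_equal.
  rewrite <- fmap_comp.
  transitivity (fmap S (fun a : T X => a) s); [|apply fmap_id].
  f_equal. apply functional_extensionality. intro a. exact (Tcase_unfold S T X a).
Qed.

Lemma Tunfold1_eta S (T : FreeMonad S) X x : Tunfold1 T X (fm_eta T x) = inr x.
Proof. unfold Tunfold1. rewrite fm_fold_eta. reflexivity. Qed.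

Lemma Tcases S (T : FreeMonad S) X (t : T X) :
  (exists x, t = fm_eta T x) \/ (exists s, t = fm_iota T s).
Proof.
  rewrite <- (Tcase_unfold S T X t). destruct (Tunfold1 T X t) as [s|x]; simpl; eauto.
Qed.

Lemma Cinf_theta (B : Functor) (C : CofreeComonad B) X (f : X -> B X) x :
  cf_theta C (Cinf C f x) = fmap B (Cinf C f) (f x).
Proof. unfold Cinf. rewrite cf_unfold_theta. reflexivity. Qed.
Lemma Cinf_eps (B : Functor) (C : CofreeComonad B) X (f : X -> B X) x :
  cf_eps C (Cinf C f x) = x.
Proof. unfold Cinf. rewrite cf_unfold_eps. reflexivity. Qed.
Lemma Cmap_theta (B : Functor) (C : CofreeComonad B) X Y (h : X -> Y) t :
  cf_theta C (Cmap C h t) = fmap B (Cmap C h) (cf_theta C t).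
Proof. unfold Cmap. rewrite cf_unfold_theta. reflexivity. Qed.
Lemma Cmap_eps (B : Functor) (C : CofreeComonad B) X Y (h : X -> Y) t :
  cf_eps C (Cmap C h t) = h (cf_eps C t).
Proof. unfold Cmap. rewrite cf_unfold_eps. reflexivity. Qed.

Lemma phi_eta S (T : FreeMonad S) (B : Functor) (C : CofreeComonad B) rho X (c : X -> B X) f x :
  phi S T B C rho c f (fm_eta T x) = fmap B (fm_eta T) (c x).
Proof. unfold phi. rewrite Tunfold1_eta. reflexivity. Qed.
Lemma phi_iota S (T : FreeMonad S) (B : Functor) (C : CofreeComonad B) rho X (c : X -> B X) f s :
  phi S T B C rho c f (fm_iota T s) = fmap B (Tmu T X) (rho (T X) (fmap S (Cinf C f) s)).
Proof. unfold phi. rewrite Tunfold1_iota. reflexivity. Qed.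

Lemma sim_gen (B : OrderedFunctor) (C : CofreeComonad B) (X A : Type) (u v : A -> C X) :
  (forall t, cf_eps C (u t) = cf_eps C (v t)) ->
  (forall t, exists p : B A, ole B (cf_theta C (u t)) (fmap B u p) /\
                             ole B (fmap B v p) (cf_theta C (v t))) ->
  forall t, Csim C X (u t) (v t).
Proof.
  intros He Hp t.
  exists (fun a b => exists t, a = u t /\ b = v t). split; [| eauto].
  intros a b [t0 [E1 E2]]. subst a b. destruct (Hp t0) as [p [H1 H2]].
  exists (fmap B u p, cf_eps C (u t0)), (fmap B v p, cf_eps C (v t0)).
  split; [split; simpl; auto|split].
  - exists (fmap B (fun t => exist (fun q : C X * C X => exists t', fst q = u t' /\ snd q = v t')
                               (u t, v t) (ex_intro _ t (conj eq_refl eq_refl))) p, cf_eps C (u t0)).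
    unfold prodmap; simpl. split; f_equal.
    + rewrite <- fmap_comp. reflexivity.
    + rewrite <- fmap_comp. reflexivity.
    + apply He.
  - split; simpl; auto.
Qed.

Lemma rel_map (S : Functor) X Y (R : X -> Y -> Prop) A (u : A -> X) (v : A -> Y)
  (H : forall t, R (u t) (v t)) s : Rel S R (fmap S u s) (fmap S v s).
Proof.
  exists (fmap S (fun t => exist (fun p : X * Y => R (fst p) (snd p)) (u t, v t) (H t)) s).
  split; rewrite <- fmap_comp; reflexivity.
Qed.

Lemma phi_mono S (T : FreeMonad S) (B : OrderedFunctor) (C : CofreeComonad B) rho
  (Hmono : biGSOS_monotone S T B C rho) X (c : X -> B X) (f g : T X -> B (T X)) :
  (forall t, ole B (f t) (g t)) ->
  forall t, ole B (phi S T B C rho c f t) (phi S T B C rho c g t).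
Proof.
  intros Hfg t. destruct (Tcases S T X t) as [[x E]|[s E]]; subst t.
  - rewrite !phi_eta. apply ole_refl.
  - rewrite !phi_iota. apply fmap_mono. apply Hmono. apply rel_map. apply sim_gen.
    + intros; rewrite !Cinf_eps; reflexivity.
    + intros t. exists (g t). rewrite !Cinf_theta. split.
      * apply fmap_mono. apply Hfg.
      * apply ole_refl.
Qed.

Definition fle (B : OrderedFunctor) Z (f g : Z -> B Z) : Prop := forall t, ole B (f t) (g t).

Definition pset (B : OrderedFunctor) Z (D : (Z -> B Z) -> Prop) (t : Z) : B Z -> Prop :=
  fun y => exists f, D f /\ y = f t.

Definition psup (B : OrderedFunctor) Z (i : inhabited (B Z)) (D : (Z -> B Z) -> Prop) : Z -> B Z :=
  fun t => epsilon i (is_sup (ole B) (pset B Z D t)).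

Lemma pdir (B : OrderedFunctor) Z D : directed (fle B Z) D -> forall t, directed (ole B) (pset B Z D t).
Proof.
  intros [[f0 Hf0] Hd] t. split.
  - exists (f0 t). exists f0. auto.
  - intros y1 y2 [f1 [H1 E1]] [f2 [H2 E2]]. subst.
    destruct (Hd f1 f2 H1 H2) as [z [Hz [L1 L2]]]. exists (z t). split.
    + exists z; auto.
    + split; auto.
Qed.

Lemma psup_pt (B : OrderedFunctor) Z (HD : DCPObot_on_countable B) (Hc : countable Z) i D :
  directed (fle B Z) D -> forall t, is_sup (ole B) (pset B Z D t) (psup B Z i D t).
Proof.
  intros Hd t. unfold psup. apply epsilon_spec.
  destruct HD as [HD1 _]. destruct (HD1 Z Hc) as [_ [_ Hs]]. apply Hs. apply pdir. auto.
Qed.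

Lemma psup_spec (B : OrderedFunctor) Z (HD : DCPObot_on_countable B) (Hc : countable Z) i D :
  directed (fle B Z) D -> is_sup (fle B Z) D (psup B Z i D).
Proof.
  intros Hd. split.
  - intros f Hf t. apply (proj1 (psup_pt B Z HD Hc i D Hd t)). exists f; auto.
  - intros u Hu t. apply (proj2 (psup_pt B Z HD Hc i D Hd t)).
    intros y [f [Hf E]]. subst. apply Hu. auto.
Qed.

Lemma prod_sup_spec (P1 P2 : Type) (le1 : P1 -> P1 -> Prop) (le2 : P2 -> P2 -> Prop)
  (sup1 : (P1 -> Prop) -> P1) (sup2 : (P2 -> Prop) -> P2)
  (H1 : forall D, directed le1 D -> is_sup le1 D (sup1 D))
  (H2 : forall D, directed le2 D -> is_sup le2 D (sup2 D)) :
  forall D, directed (fun p q => le1 (fst p) (fst q) /\ le2 (snd p) (snd q)) D ->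
  is_sup (fun p q => le1 (fst p) (fst q) /\ le2 (snd p) (snd q)) D
    (sup1 (fun a => exists b, D (a, b)), sup2 (fun b => exists a, D (a, b))).
Proof.
  intros D [[[a0 b0] H0] Hd].
  assert (d1 : directed le1 (fun a => exists b, D (a, b))).
  { split. exists a0, b0; auto.
    intros x y [bx Hx] [by' Hy]. destruct (Hd _ _ Hx Hy) as [[za zb] [Hz [[L1 _] [L2 _]]]].
    exists za. split. exists zb; auto. simpl in *; auto. }
  assert (d2 : directed le2 (fun b => exists a, D (a, b))).
  { split. exists b0, a0; auto.
    intros x y [ax Hx] [ay Hy]. destruct (Hd _ _ Hx Hy) as [[za zb] [Hz [[_ L1] [_ L2]]]].
    exists zb. split. exists za; auto. simpl in *; auto. }
  destruct (H1 _ d1) as [U1 L1]. destruct (H2 _ d2) as [U2 L2].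
  split.
  - intros [a b] Hab. simpl. split. apply U1. exists b; auto. apply U2. exists a; auto.
  - intros [ua ub] Hu. simpl. split.
    + apply L1. intros a [b Hab]. apply (proj1 (Hu _ Hab)).
    + apply L2. intros b [a Hab]. apply (proj2 (Hu _ Hab)).
Qed.

Lemma fmap_bot (B : OrderedFunctor) (HD : DCPObot_on_countable B) Z Z' (k : Z -> Z')
  (Hc : countable Z) (Hc' : countable Z') (b : B Z) :
  is_bot (ole B) b -> forall u, ole B (fmap B k b) u.
Proof.
  intros Hb u. destruct HD as [_ HD2]. destruct (HD2 Z Z' k Hc Hc') as [_ He].
  assert (Hs : is_sup (ole B) (fun _ : B Z => False) b).
  { split. intros x []. intros v _. apply Hb. }
  apply (proj2 (He b Hs)). intros x [].
Qed.

Lemma fmap_sup (B : OrderedFunctor) (HD : DCPObot_on_countable B) Z Z' (k : Z -> Z')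
  (Hc : countable Z) (Hc' : countable Z') (D : B Z -> Prop) s :
  directed (ole B) D -> is_sup (ole B) D s ->
  is_sup (ole B) (fun y => exists x, D x /\ y = fmap B k x) (fmap B k s).
Proof.
  intros. destruct HD as [_ HD2]. destruct (HD2 Z Z' k Hc Hc') as [Hp _]. apply Hp; auto.
Qed.

Lemma kleisli_hom S (T : FreeMonad S) (B : OrderedFunctor) (C : CofreeComonad B) rho
  (HD : DCPObot_on_countable B) (Hnat : biGSOS_natural S T B C rho)
  (Hmono : biGSOS_monotone S T B C rho)
  X Y (HX : countable (T X)) (HY : countable (T Y)) (c : X -> B X) (d : Y -> B Y)
  (s1 : T X -> B (T X)) (s2 : T Y -> B (T Y))
  (H1 : is_lfp S T B C rho c s1) (H2 : is_lfp S T B C rho d s2)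
  (k : T X -> T Y)
  (K1 : forall s, k (fm_iota T s) = fm_iota T (fmap S k s))
  (K2 : forall t, k (Tmu T X t) = Tmu T Y (Tmap T k t))
  (K3 : forall x, fmap B k (fmap B (fm_eta T) (c x)) = s2 (k (fm_eta T x))) :
  forall t, fmap B k (s1 t) = s2 (k t).
Proof.
  assert (HD' := HD). destruct HD' as [HD1 _].
  destruct (HD1 _ HX) as [AX [[botX HbX] _]].
  destruct (HD1 _ HY) as [AY [[botY HbY] _]].
  pose (iX := inhabits botX). pose (iY := inhabits botY).
  assert (Lk : forall f s, fmap B k (phi S T B C rho c f (fm_iota T s)) =
     fmap B (Tmu T Y) (rho (T Y) (fmap S (fun t => Cmap C k (Cinf C f t)) s))).
  { intros f s. rewrite phi_iota, <- fmap_comp.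
    replace (fun a => k (Tmu T X a)) with (fun a => Tmu T Y (Tmap T k a))
      by (apply functional_extensionality; intro; symmetry; apply K2).
    rewrite fmap_comp. rewrite <- Hnat. rewrite <- fmap_comp. reflexivity. }
  assert (Rk : forall g s, phi S T B C rho d g (k (fm_iota T s)) =
     fmap B (Tmu T Y) (rho (T Y) (fmap S (fun t => Cinf C g (k t)) s))).
  { intros g s. rewrite K1, phi_iota, <- fmap_comp. reflexivity. }
  assert (Fix2 : forall t, phi S T B C rho d s2 t = s2 t) by apply (proj1 H2).
  assert (Le1 : forall t, ole B (fmap B k (s1 t)) (s2 (k t))).
  { pose (Q := fun f : T X -> B (T X) => forall t, ole B (fmap B k (f t)) (s2 (k t))).
    assert (Qbot : Q (fun _ => botX)).
    { intro t. apply (fmap_bot B HD); auto. }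
    assert (Qf : forall f, Q f -> Q (phi S T B C rho c f)).
    { intros f Hf t. destruct (Tcases S T X t) as [[x E]|[s E]]; subst t.
      - rewrite phi_eta, K3. apply ole_refl.
      - rewrite Lk, <- Fix2, Rk. apply fmap_mono. apply Hmono. apply rel_map.
        apply sim_gen.
        + intros t. rewrite Cmap_eps, !Cinf_eps. reflexivity.
        + intros t. exists (f t). rewrite Cmap_theta, !Cinf_theta, <- fmap_comp. split.
          * apply ole_refl.
          * rewrite fmap_comp. apply fmap_mono. apply Hf. }
    assert (Qsup : forall D, directed (fle B (T X)) D -> (forall f, D f -> Q f) -> Q (psup B (T X) iX D)).
    { intros D Hd HQ t.
      destruct (fmap_sup B HD _ _ k HX HY _ _ (pdir B (T X) D Hd t) (psup_pt B (T X) HD HX iX D Hd t))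
        as [_ Hl].
      apply Hl. intros y [x [[f [Hf E]] E']]. subst. apply HQ. auto. }
    destruct (pataraia (T X -> B (T X)) (fle B (T X))
      (fun f t => ole_refl B _ (f t))
      (fun f g h H H' t => ole_trans B _ _ _ _ (H t) (H' t))
      (fun _ => botX) (fun f t => HbX (f t))
      (psup B (T X) iX) (psup_spec B (T X) HD HX iX)
      (phi S T B C rho c) (phi_mono S T B C rho Hmono X c)
      Q Qbot Qf Qsup) as [m [Hm1 [Hm2 [HQ _]]]].
    assert (Fm : forall t, phi S T B C rho c m t = m t).
    { intro t. apply AX; auto. }
    intro t. apply ole_trans with (fmap B k (m t)).
    - apply fmap_mono. apply (proj2 H1). exact Fm.
    - apply HQ. }
  assert (Le2 : forall t, ole B (s2 (k t)) (fmap B k (s1 t))).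
  { pose (le := fun p q : (T X -> B (T X)) * (T Y -> B (T Y)) =>
                fle B (T X) (fst p) (fst q) /\ fle B (T Y) (snd p) (snd q)).
    pose (Q := fun p : (T X -> B (T X)) * (T Y -> B (T Y)) =>
       (forall u, ole B (snd p u) (s2 u)) /\ (forall t, ole B (snd p (k t)) (fmap B k (fst p t)))).
    pose (F := fun p : (T X -> B (T X)) * (T Y -> B (T Y)) =>
                (phi S T B C rho c (fst p), phi S T B C rho d (snd p))).
    pose (sup := fun D : (T X -> B (T X)) * (T Y -> B (T Y)) -> Prop =>
        (psup B (T X) iX (fun a => exists b, D (a, b)), psup B (T Y) iY (fun b => exists a, D (a, b)))).
    assert (Qbot : Q (fun _ => botX, fun _ => botY)).
    { split; intros; apply HbY. }
    assert (Qf : forall p, Q p -> Q (F p)).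
    { intros [f1 f2] [Hq1 Hq2]. unfold Q, F in *; cbn [fst snd] in *. split.
      - intro u. rewrite <- Fix2. apply phi_mono; auto.
      - intro t. destruct (Tcases S T X t) as [[x E]|[s E]]; subst t.
        + apply ole_trans with (phi S T B C rho d s2 (k (fm_eta T x))).
          * apply phi_mono; auto.
          * rewrite Fix2, <- K3, phi_eta. apply ole_refl.
        + rewrite Lk, Rk. apply fmap_mono. apply Hmono. apply rel_map.
          apply sim_gen.
          * intros t. rewrite Cmap_eps, !Cinf_eps. reflexivity.
          * intros t. exists (f1 t). split.
            -- rewrite Cinf_theta. apply ole_trans with (fmap B (Cinf C f2) (fmap B k (f1 t))).
               ++ apply fmap_mono. apply Hq2.
               ++ rewrite <- fmap_comp. apply ole_refl.
            -- rewrite Cmap_theta, Cinf_theta, <- fmap_comp. apply ole_refl. }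
    assert (Qsup : forall D, directed le D -> (forall p, D p -> Q p) -> Q (sup D)).
    { intros D Hd HQ.
      assert (Hs := prod_sup_spec _ _ _ _ _ _ (psup_spec B (T X) HD HX iX) (psup_spec B (T Y) HD HY iY) D Hd).
      destruct Hs as [Hu _].
      assert (d2 : directed (fle B (T Y)) (fun b => exists a, D (a, b))).
      { destruct Hd as [[[a0 b0] H0] Hd]. split. exists b0, a0; auto.
        intros x y [ax Hx] [ay Hy]. destruct (Hd _ _ Hx Hy) as [[za zb] [Hz [[_ L1] [_ L2]]]].
        exists zb. split. exists za; auto. simpl in *; auto. }
      simpl. split.
      - intro u. apply (proj2 (psup_pt B (T Y) HD HY iY _ d2 u)).
        intros y [f2 [[f1 Hf] E]]. subst. apply (proj1 (HQ _ Hf)).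
      - intro t. apply (proj2 (psup_pt B (T Y) HD HY iY _ d2 (k t))).
        intros y [f2 [[f1 Hf] E]]. subst. apply ole_trans with (fmap B k (f1 t)).
        + apply (proj2 (HQ _ Hf)).
        + apply fmap_mono. apply (proj1 (Hu _ Hf)). }
    destruct (pataraia _ le
      (fun p => conj (fun t => ole_refl B _ (fst p t)) (fun t => ole_refl B _ (snd p t)))
      (fun p q r H H' => conj (fun t => ole_trans B _ _ _ _ (proj1 H t) (proj1 H' t))
                               (fun t => ole_trans B _ _ _ _ (proj2 H t) (proj2 H' t)))
      (fun _ => botX, fun _ => botY)
      (fun p => conj (fun t => HbX (fst p t)) (fun t => HbY (snd p t)))
      sup (prod_sup_spec _ _ _ _ _ _ (psup_spec B (T X) HD HX iX) (psup_spec B (T Y) HD HY iY))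
      F (fun p q H => conj (phi_mono S T B C rho Hmono X c _ _ (proj1 H))
                            (phi_mono S T B C rho Hmono Y d _ _ (proj2 H)))
      Q Qbot Qf Qsup) as [[m1 m2] [Hm1 [Hm2 [[HQ1 HQ2] Hmin]]]].
    simpl in *.
    assert (Fm2 : forall t, phi S T B C rho d m2 t = m2 t).
    { intro t. apply AY. apply (proj2 Hm1). apply (proj2 Hm2). }
    assert (Lm1 : forall t, ole B (m1 t) (s1 t)).
    { apply (Hmin (s1, s2)). split; simpl; intro t.
      - rewrite (proj1 H1). apply ole_refl.
      - rewrite Fix2. apply ole_refl. }
    intro t. apply ole_trans with (m2 (k t)).
    - apply (proj2 H2). exact Fm2.
    - apply ole_trans with (fmap B k (m1 t)). apply HQ2. apply fmap_mono. apply Lm1. }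
  intro t. apply AY; auto.
Qed.
Theorem mainTheorem11 (S : Functor) (T : FreeMonad S) (B : OrderedFunctor)
  (C : CofreeComonad B) (rho : forall X : Type, S (C X) -> B (T X)) :
  (forall X : Type, countable X -> countable (T X)) ->
  preserves_weak_pullbacks B ->
  DCPObot_on_countable B ->
  biGSOS_natural S T B C rho ->
  biGSOS_monotone S T B C rho ->
  (* the least fixed point c^# of φ_c exists *)
  (forall (X : Type) (c : X -> B X), countable X ->
     exists s : T X -> B (T X), is_lfp S T B C rho c s) /\
  (* and (Σ*X, c^#), Σ*h, η, μ form a monad on Coalg_c(B) lifting Σ*_c *)
  (forall sharp : forall X : Type, (X -> B X) -> T X -> B (T X),
     (forall (X : Type) (c : X -> B X), countable X -> is_lfp S T B C rho c (sharp X c)) ->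
     (* object part lands in Coalg_c(B) *)
     (forall X : Type, countable X -> countable (T X)) /\
     (* morphism part: Σ*h is a coalgebra morphism *)
     (forall (X Y : Type) (c : X -> B X) (d : Y -> B Y) (h : X -> Y),
        countable X -> countable Y -> coalg_hom B c d h ->
        coalg_hom B (sharp X c) (sharp Y d) (Tmap T h)) /\
     (* functor laws *)
     (forall (X : Type), countable X -> forall t : T X, Tmap T (fun x : X => x) t = t) /\
     (forall (X Y Z : Type) (h : X -> Y) (g : Y -> Z),
        countable X -> countable Y -> countable Z ->
        forall t : T X, Tmap T (fun x => g (h x)) t = Tmap T g (Tmap T h t)) /\
     (* unit: components are coalgebra morphisms, natural *)
     (forall (X : Type) (c : X -> B X), countable X ->
        coalg_hom B c (sharp X c) (fm_eta T)) /\
     (forall (X Y : Type) (h : X -> Y), countable X -> countable Y ->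
        forall x : X, Tmap T h (fm_eta T x) = fm_eta T (h x)) /\
     (* multiplication: components are coalgebra morphisms, natural *)
     (forall (X : Type) (c : X -> B X), countable X ->
        coalg_hom B (sharp (T X) (sharp X c)) (sharp X c) (Tmu T X)) /\
     (forall (X Y : Type) (h : X -> Y), countable X -> countable Y ->
        forall t : T (T X), Tmap T h (Tmu T X t) = Tmu T Y (Tmap T (Tmap T h) t)) /\
     (* monad laws *)
     (forall (X : Type), countable X ->
        forall t : T X, Tmu T X (fm_eta T t) = t) /\
     (forall (X : Type), countable X ->
        forall t : T X, Tmu T X (Tmap T (fm_eta T) t) = t) /\
     (forall (X : Type), countable X ->
        forall t : T (T (T X)), Tmu T X (Tmu T (T X) t) = Tmu T X (Tmap T (Tmu T X) t))).
Proof.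
  intros HT Hwp HD Hnat Hmono. split.
  - intros X c HX.
    assert (HTX := HT X HX).
    assert (HD' := HD). destruct HD' as [HD1 _].
    destruct (HD1 _ HTX) as [AX [[botX HbX] _]].
    pose (iX := inhabits botX).
    destruct (pataraia (T X -> B (T X)) (fle B (T X))
      (fun f t => ole_refl B _ (f t))
      (fun f g h H H' t => ole_trans B _ _ _ _ (H t) (H' t))
      (fun _ => botX) (fun f t => HbX (f t))
      (psup B (T X) iX) (psup_spec B (T X) HD HTX iX)
      (phi S T B C rho c) (phi_mono S T B C rho Hmono X c)
      (fun _ => True) I (fun _ _ => I) (fun _ _ _ => I)) as [m [Hm1 [Hm2 [_ Hmin]]]].
    exists m. split.
    + intro t. apply AX; auto.
    + intros g Hg. apply Hmin. intro t. rewrite Hg. apply ole_refl.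
  - intros sharp Hsh.
    assert (Fix : forall X c, countable X -> forall t, phi S T B C rho c (sharp X c) t = sharp X c t).
    { intros X c HX. apply (proj1 (Hsh X c HX)). }
    split; [exact HT|].
    split.
    { intros X Y c d h HX HY Hh x.
      apply (kleisli_hom S T B C rho HD Hnat Hmono X Y (HT X HX) (HT Y HY) c d
               (sharp X c) (sharp Y d) (Hsh X c HX) (Hsh Y d HY)).
      - intros; apply Tmap_iota.
      - intros; apply Tmu_nat.
      - intros x0. rewrite Tmap_eta, <- !fmap_comp, <- Fix by exact HY. rewrite phi_eta.
        rewrite <- Hh, <- fmap_comp. f_equal. apply functional_extensionality; intro; apply Tmap_eta. }
    split; [intros; apply Tmap_id|].
    split; [intros; apply Tmap_comp|].
    split.
    { intros X c HX x. rewrite <- Fix by exact HX. rewrite phi_eta. reflexivity. }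
    split; [intros; apply Tmap_eta|].
    split.
    { intros X c HX x.
      apply (kleisli_hom S T B C rho HD Hnat Hmono (T X) X (HT _ (HT X HX)) (HT X HX)
               (sharp X c) c (sharp (T X) (sharp X c)) (sharp X c)
               (Hsh (T X) (sharp X c) (HT X HX)) (Hsh X c HX)).
      - intros; apply Tmu_iota.
      - intros; apply Tmu_assoc.
      - intros u. rewrite <- fmap_comp, Tmu_eta.
        transitivity (fmap B (fun a : T X => a) (sharp X c u)); [|apply fmap_id].
        f_equal. apply functional_extensionality; intro; apply Tmu_eta. }
    split; [intros; apply Tmu_nat|].
    split; [intros; apply Tmu_eta|].
    split; [intros; apply Tmu_Tmap_eta|].
    intros; apply Tmu_assoc.
Qed.
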